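(* There is a universal constant $c>0$ such that the following holds. Let $P$ be an irreducible, aperiodic transition matrix on a finite state space $G$, reversible with respect to the probability measure $\pi$, with $\lambda$, $\pi_{\min}$, $\pi_{\max}$ as in the context. Then for all $x\neq y$ in $G$, $$\Pr_x[T_y<T_x^+]\ge \frac{c(1-\lambda)\pi_{\min}}{\pi_{\max}}.$$ In other words $u(P)\ge c(1-\lambda)\pi_{\min}/\pi_{\max}$.
   Context: $(X_t)$ is the chain with transition matrix $P$. $\lambda=\max_{j>1}|\lambda_j|$, where $1=\lambda_1>\lambda_2\ge\dots\ge\lambda_n>-1$ are the eigenvalues of $P$. $\pi_{\min}=\min_x\pi(x)$ and $\pi_{\max}=\max_x\pi(x)$. $T_y=\inf\{t\ge0:X_t=y\}$ and $T_x^+=\inf\{t\ge1:X_t=x\}$. $\Pr_x$ is the law of the chain started at $x$. $u(P):=\min_{x\ne y}\Pr_x[T_y<T_x^+]$. *)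

(* Defs.v *)
From HB Require Import structures.
From Stdlib Require Import Reals Lra ClassicalEpsilon FunctionalExtensionality.
From mathcomp Require Import all_boot all_algebra.

Set Implicit Arguments.
Unset Strict Implicit.
Unset Printing Implicit Defensive.

Definition Reqb (a b : R) : bool := if Req_EM_T a b then true else false.

Lemma Reqb_axiom : Equality.axiom Reqb.
Proof. move=> a b; rewrite /Reqb; case: Req_EM_T => h; by constructor. Qed.

HB.instance Definition _ := hasDecEq.Build R Reqb_axiom.

Definition Rfind (P : pred R) (n : nat) : option R :=
  match excluded_middle_informative (exists x, P x) with
  | left h => Some (proj1_sig (constructive_indefinite_description _ h))
  | right _ => None
  end.

Lemma Rfind_correct P n x : Rfind P n = Some x -> P x.
Proof.
rewrite /Rfind; case: excluded_middle_informative => // h [<-].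
exact: proj2_sig (constructive_indefinite_description _ h).
Qed.

Lemma Rfind_complete (P : pred R) : (exists x, P x) -> exists n, Rfind P n.
Proof. move=> h; exists 0%N; rewrite /Rfind; by case: excluded_middle_informative. Qed.

Lemma Rfind_ext (P Q : pred R) : P =1 Q -> Rfind P =1 Rfind Q.
Proof.
move=> e; have -> : P = Q by apply: functional_extensionality.
by [].
Qed.

HB.instance Definition _ :=
  hasChoice.Build R Rfind_correct Rfind_complete Rfind_ext.

Lemma R_addA : associative Rplus. Proof. move=> *; ring. Qed.
Lemma R_addC : commutative Rplus. Proof. move=> *; ring. Qed.
Lemma R_add0 : left_id R0 Rplus. Proof. move=> *; ring. Qed.
Lemma R_addN : left_inverse R0 Ropp Rplus. Proof. move=> *; ring. Qed.

HB.instance Definition _ := GRing.isZmodule.Build R R_addA R_addC R_add0 R_addN.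

Lemma R_mulA : associative Rmult. Proof. move=> *; ring. Qed.
Lemma R_mulC : commutative Rmult. Proof. move=> *; ring. Qed.
Lemma R_mul1 : left_id R1 Rmult. Proof. move=> *; ring. Qed.
Lemma R_mulD : left_distributive Rmult Rplus. Proof. move=> *; ring. Qed.
Lemma R_one_neq0 : (R1 : R) != R0.
Proof. apply/eqP; exact: R1_neq_R0. Qed.

HB.instance Definition _ :=
  GRing.Zmodule_isComNzRing.Build R R_mulA R_mulC R_mul1 R_mulD R_one_neq0.

Local Open Scope R_scope.

Definition transition_matrix (n : nat) (P : 'M[R]_n) : Prop :=
  (forall x y, 0 <= P x y) /\ (forall x, (\sum_(y < n) P x y)%R = 1).

Fixpoint mpow (n : nat) (P : 'M[R]_n) (t : nat) : 'M[R]_n :=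
  match t with
  | O => 1%:M
  | S t' => (mpow P t' *m P)%R
  end.

Definition irreducible (n : nat) (P : 'M[R]_n) : Prop :=
  forall x y : 'I_n, exists t : nat, 0 < mpow P t x y.

Definition aperiodic (n : nat) (P : 'M[R]_n) : Prop :=
  forall x : 'I_n, forall d : nat,
    (forall t : nat, (0 < t)%N -> 0 < mpow P t x x -> (d %| t)%N) -> d = 1%N.

Definition probability (n : nat) (pi : 'I_n -> R) : Prop :=
  (forall x, 0 <= pi x) /\ (\sum_(x < n) pi x)%R = 1.

Definition reversible (n : nat) (P : 'M[R]_n) (pi : 'I_n -> R) : Prop :=
  forall x y, pi x * P x y = pi y * P y x.

(* pi_min and pi_max (the seed x0 is any state; it does not affect the value) *)
Definition pi_min (n : nat) (pi : 'I_n -> R) (x0 : 'I_n) : R :=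
  \big[Rmin/pi x0]_(z < n) pi z.
Definition pi_max (n : nat) (pi : 'I_n -> R) (x0 : 'I_n) : R :=
  \big[Rmax/pi x0]_(z < n) pi z.

(* s lists the eigenvalues of P with algebraic multiplicity, in
   non-increasing order: 1 = lambda_1 >= lambda_2 >= ... >= lambda_n *)
Definition Rgeb (a b : R) : bool := if Rle_dec b a then true else false.

Definition eigenvalue_list (n : nat) (P : 'M[R]_n) (s : seq R) : Prop :=
  char_poly P = (\prod_(a <- s) ('X - a%:P))%R /\ sorted Rgeb s.

Definition slem (s : seq R) : R := \big[Rmax/0]_(a <- behead s) Rabs a.

(* Taboo first-passage vectors for the chain started at x:
   fp P x y k z = Pr_x[X_k = z, X_j \notin {x,y} for 1 <= j < k]  (k >= 1). *)
Fixpoint fp (n : nat) (P : 'M[R]_n) (x y : 'I_n) (k : nat) (z : 'I_n) : R :=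
  match k with
  | O => if z == x then 1 else 0
  | S k' =>
      (\sum_(w < n | (k' == 0)%N || ((w != x) && (w != y))) fp P x y k' w * P w z)%R
  end.

(* Pr_x[T_y = k+1 < T_x^+] *)
Definition escape_term (n : nat) (P : 'M[R]_n) (x y : 'I_n) (k : nat) : R :=
  fp P x y k.+1 y.

(* p = Pr_x[T_y < T_x^+] = \sum_{k>=1} Pr_x[T_y = k < T_x^+] *)
Definition escape_prob (n : nat) (P : 'M[R]_n) (x y : 'I_n) (p : R) : Prop :=
  infinite_sum (escape_term P x y) p.

(* Main.v *)
Require Import Defs.
From Stdlib Require Import Reals Lra Lia.
From mathcomp Require Import all_boot all_algebra.
Set Implicit Arguments.
Unset Strict Implicit.
Unset Printing Implicit Defensive.
Local Open Scope R_scope.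
From Stdlib Require Import Classical.

Ltac rn := repeat match goal with
 | |- context [@Algebra.zero ?T] => change (@Algebra.zero T) with R0
 | |- context [@GRing.one ?T] => change (@GRing.one T) with R1
 | |- context [@Algebra.add ?T ?a ?b] => change (@Algebra.add T a b) with (Rplus a b)
 | |- context [@GRing.mul ?T ?a ?b] => change (@GRing.mul T a b) with (Rmult a b)
 | |- context [@Algebra.opp ?T ?a] => change (@Algebra.opp T a) with (Ropp a)
 | |- context [@fun_of_matrix ?T ?m ?k ?M ?i ?j] =>
     lazymatch T with R => fail | _ => change (@fun_of_matrix T m k M i j) with (@fun_of_matrix R m k M i j) end
 end.
Ltac fixR := match goal with |- @eq _ ?a ?b => change (@eq R a b) end; rn.

Definition rsum n (F : 'I_n -> R) : R := (\sum_(z < n) F z)%R.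

Lemma rsum_ext n (F G : 'I_n -> R) : (forall z, F z = G z) -> rsum F = rsum G.
Proof. move=> h; apply: eq_bigr => z _; exact: h. Qed.

Lemma rsum_add n (F G : 'I_n -> R) :
  rsum (fun z => F z + G z) = rsum F + rsum G.
Proof. exact: big_split. Qed.

Lemma rsum_scal n c (F : 'I_n -> R) : rsum (fun z => c * F z) = c * rsum F.
Proof. transitivity (c * rsum F)%R; last by []. by rewrite /rsum GRing.mulr_sumr. Qed.

Lemma rsum_opp n (F : 'I_n -> R) : rsum (fun z => - F z) = - rsum F.
Proof.
rewrite (rsum_ext (G := fun z => (-1) * F z)); last by move=> z; ring.
rewrite rsum_scal; ring.
Qed.

Lemma rsum_sub n (F G : 'I_n -> R) :
  rsum (fun z => F z - G z) = rsum F - rsum G.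
Proof.
rewrite /Rminus -rsum_opp -rsum_add; by [].
Qed.

Lemma rsum0 n : rsum (fun _ : 'I_n => 0) = 0.
Proof. rewrite /rsum; exact: big1. Qed.

Lemma rsum_const n c : rsum (fun _ : 'I_n => c) = INR n * c.
Proof.
rewrite /rsum; elim: n => [|n IH]; first by rewrite big_ord0 /=; fixR; ring.
rewrite big_ord_recr /= IH.
change ((INR n * c + c) = INR n.+1 * c); rewrite S_INR; ring.
Qed.

Lemma rsum_ge0 n (F : 'I_n -> R) : (forall z, 0 <= F z) -> 0 <= rsum F.
Proof.
move=> h; rewrite /rsum; apply: (big_ind (fun v => 0 <= v)) => //.
- exact: Rle_refl.
- move=> a b ha hb; change (0 <= a + b); lra.
Qed.

Lemma rsum_le n (F G : 'I_n -> R) : (forall z, F z <= G z) -> rsum F <= rsum G.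
Proof.
move=> h; have := rsum_ge0 (F := fun z => G z - F z).
rewrite rsum_sub => H; have := H (fun z => ltac:(have := h z; lra)); lra.
Qed.

Lemma rsum_exch n m (F : 'I_n -> 'I_m -> R) :
  rsum (fun z => rsum (fun w => F z w)) = rsum (fun w => rsum (fun z => F z w)).
Proof. rewrite /rsum; exact: exchange_big. Qed.

Lemma rsum_D1 n (F : 'I_n -> R) z0 :
  rsum F = F z0 + rsum (fun z => if z != z0 then F z else 0).
Proof.
rewrite /rsum (bigD1 z0) //= big_mkcond /=; by [].
Qed.

Lemma rsum_D2 n (F : 'I_n -> R) x y : x != y ->
  rsum F = F x + F y + rsum (fun z => if (z != x) && (z != y) then F z else 0).
Proof.
move=> hxy; rewrite (rsum_D1 F x) (rsum_D1 _ y) eq_sym hxy.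
rewrite Rplus_assoc; congr (_ + (_ + _)).
apply: rsum_ext => z; by case: (z != x); case: (z != y).
Qed.

Lemma rsum_ge_term n (F : 'I_n -> R) z0 : (forall z, 0 <= F z) -> F z0 <= rsum F.
Proof.
move=> h; rewrite (rsum_D1 F z0).
have : 0 <= rsum (fun z => if z != z0 then F z else 0).
  apply: rsum_ge0 => z; case: (z != z0) => //; exact: Rle_refl.
lra.
Qed.

Lemma rsum_pos_ex n (F : 'I_n -> R) : 0 < rsum F -> exists z, 0 < F z.
Proof.
move=> h; apply: NNPP => hn.
have : rsum F <= rsum (fun _ : 'I_n => 0).
  apply: rsum_le => z; apply: Rnot_lt_le => hz; apply: hn; by exists z.
rewrite rsum0; lra.
Qed.

Lemma rsum_eq0_each n (F : 'I_n -> R) :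
  (forall z, 0 <= F z) -> rsum F <= 0 -> forall z, F z = 0.
Proof.
move=> h hs z; have := rsum_ge_term z h; have := h z; lra.
Qed.
Lemma Rdiv_le_0_compat a b : 0 <= a -> 0 < b -> 0 <= a / b.
Proof. move=> ha hb; apply: Rmult_le_pos => //; apply: Rlt_le; exact: Rinv_0_lt_compat. Qed.

Definition Dop (a : R) (u : nat -> R) (k : nat) : R := u (S k) - a * u k.
Fixpoint app_ops (r : seq R) (u : nat -> R) : nat -> R :=
  match r with
  | [::] => u
  | a :: r' => Dop a (app_ops r' u)
  end.

Lemma pos_pow_INR k m : 0 < (INR k + 1) ^ m.
Proof. apply: pow_lt; have := pos_INR k; lra. Qed.

Lemma step_bound rho a D m (w : nat -> R) :
  0 < rho -> Rabs a <= rho -> 0 <= D ->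
  (forall k, Rabs (w (S k) - a * w k) <= D * (INR k + 1) ^ m * rho ^ k) ->
  forall k, Rabs (w k) <= (Rabs (w O) + D / rho) * (INR k + 1) ^ (S m) * rho ^ k.
Proof.
move=> hr ha hD h; elim=> [|k IH].
  rewrite /= Rplus_0_l pow1; have : 0 <= D / rho by apply: Rdiv_le_0_compat; lra.
  lra.
set E := Rabs (w O) + D / rho.
have hE : D <= E * rho.
  rewrite /E Rmult_plus_distr_r /Rdiv Rmult_assoc Rinv_l; last lra.
  have := Rabs_pos (w O); nra.
have hk := pos_INR k.
have e1 : w (S k) = a * w k + (w (S k) - a * w k) by ring.
have h1 : Rabs (w (S k)) <= rho * Rabs (w k) + D * (INR k + 1) ^ m * rho ^ k.
  rewrite e1; apply: Rle_trans (Rabs_triang _ _) _; rewrite Rabs_mult.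
  have := h k; have := Rabs_pos (w k); have := Rabs_pos a; nra.
have hp := pos_pow_INR k m.
have hrk : 0 < rho ^ k by apply: pow_lt.
rewrite S_INR.
have hpow : (INR k + 1) ^ S m + (INR k + 1) ^ m <= (INR k + 1 + 1) ^ S m.
  rewrite /= -/(pow _ m).
  have : (INR k + 1) ^ m <= (INR k + 1 + 1) ^ m.
    apply: pow_incr; lra.
  nra.
have hE0 : 0 <= E.
  rewrite /E; have := Rabs_pos (w O); have : 0 <= D / rho by apply: Rdiv_le_0_compat; lra.
  lra.
apply: Rle_trans h1 _.
have X1 : rho * Rabs (w k) <= rho * (E * (INR k + 1) ^ S m * rho ^ k).
  apply: Rmult_le_compat_l; [lra|exact: IH].
have X2 : D * (INR k + 1) ^ m * rho ^ k <= E * rho * (INR k + 1) ^ m * rho ^ k.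
  apply: Rmult_le_compat_r; [lra|]; apply: Rmult_le_compat_r; lra.
have X3 : E * ((INR k + 1) ^ S m + (INR k + 1) ^ m) <= E * (INR k + 1 + 1) ^ S m.
  apply: Rmult_le_compat_l; lra.
have X4 : 0 <= rho ^ S k by apply: pow_le; lra.
have X5 : E * ((INR k + 1) ^ S m + (INR k + 1) ^ m) * rho ^ S k <= E * (INR k + 1 + 1) ^ S m * rho ^ S k.
  by apply: Rmult_le_compat_r.
have e2 : rho * (E * (INR k + 1) ^ S m * rho ^ k) + E * rho * (INR k + 1) ^ m * rho ^ k
   = E * ((INR k + 1) ^ S m + (INR k + 1) ^ m) * rho ^ S k.
  rewrite [rho ^ S k]/=; ring.
lra.
Qed.

Lemma growth rho (r : seq R) : 0 < rho -> (forall a, List.In a r -> Rabs a <= rho) ->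
  forall m D (u : nat -> R), 0 <= D ->
  (forall k, Rabs (app_ops r u k) <= D * (INR k + 1) ^ m * rho ^ k) ->
  exists E, 0 <= E /\ forall k, Rabs (u k) <= E * (INR k + 1) ^ (m + size r) * rho ^ k.
Proof.
move=> hr; elim: r => [|a r IH] hin m D u hD h.
  exists D; split => // k; rewrite addn0; exact: h.
have ha : Rabs a <= rho by apply: hin; left.
have h2 := step_bound (w := app_ops r u) hr ha hD h.
have hE : 0 <= Rabs (app_ops r u O) + D / rho.
  have := Rabs_pos (app_ops r u O); have : 0 <= D / rho by apply: Rdiv_le_0_compat; lra.
  lra.
have [E [hE0 hE1]] := IH (fun b hb => hin b (or_intror hb)) (S m) _ u hE h2.
exists E; split => // k; rewrite /= addnS -addSn; exact: hE1.
Qed.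

Lemma bernoulli y N : 1 <= y -> 1 + INR N * (y - 1) <= y ^ N.
Proof.
move=> hy; elim: N => [|N IH]; first by rewrite /=; lra.
rewrite S_INR /=.
have h1 : 1 <= y ^ N by apply: pow_R1_Rle.
nra.
Qed.

Lemma polyexp d : forall y, 1 < y -> exists C, 0 < C /\ forall N, (INR N + 1) ^ d <= C * y ^ N.
Proof.
elim: d => [|d IH] y hy.
  exists 1; split; first lra. move=> N; rewrite /= Rmult_1_l; apply: pow_R1_Rle; lra.
set z := sqrt y.
have hz : 1 < z.
  rewrite /z -sqrt_1; apply: sqrt_lt_1; lra.
have hzz : z * z = y by rewrite /z sqrt_sqrt; lra.
have [C [hC hC1]] := IH z hz.
set C' := 1 + / (z - 1).
have hC' : 0 < C'.
  rewrite /C'; have : 0 < / (z - 1) by apply: Rinv_0_lt_compat; lra.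
  lra.
have hlin : forall N, INR N + 1 <= C' * z ^ N.
  move=> N; have hb := bernoulli N (Rlt_le _ _ hz).
  have hN := pos_INR N.
  have hinv : / (z - 1) * (z - 1) = 1 by field; lra.
  have hi : 0 < / (z - 1) by apply: Rinv_0_lt_compat; lra.
  rewrite /C'.
  have : (1 + / (z - 1)) * (1 + INR N * (z - 1)) <= (1 + / (z - 1)) * z ^ N.
    apply: Rmult_le_compat_l; lra.
  nra.
exists (C * C'); split; first exact: Rmult_lt_0_compat.
move=> N.
rewrite /= (_ : y ^ N = z ^ N * z ^ N); last by rewrite -Rpow_mult_distr hzz.
have h1 := hC1 N; have h2 := hlin N.
have p1 : 0 <= (INR N + 1) ^ d by apply: Rlt_le; apply: pos_pow_INR.
have p2 : 0 <= INR N + 1 by have := pos_INR N; lra.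
have := Rmult_le_compat _ _ _ _ p2 p1 h2 h1.
lra.
Qed.

Lemma exp_beats x K d : 1 < x -> 0 <= K ->
  ~ (forall m : nat, x ^ (2 ^ m)%N <= K * (INR (2 ^ m)%N + 1) ^ d).
Proof.
move=> hx hK hall.
set y := sqrt x.
have hy : 1 < y by rewrite /y -sqrt_1; apply: sqrt_lt_1; lra.
have hyy : y * y = x by rewrite /y sqrt_sqrt; lra.
have [C [hC hC1]] := polyexp d hy.
have hb : forall m : nat, y ^ (2 ^ m)%N <= K * C.
  move=> m; set N := (2 ^ m)%N.
  have h1 := hall m; have h2 := hC1 N.
  have e : x ^ N = y ^ N * y ^ N by rewrite -hyy Rpow_mult_distr.
  have hyN : 0 < y ^ N by apply: pow_lt; lra.
  have : y ^ N * y ^ N <= K * C * y ^ N.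
    rewrite -e; apply: Rle_trans h1 _; rewrite Rmult_assoc; apply: Rmult_le_compat_l => //.
  nra.
have [m hm] := INR_archimed (y - 1) (K * C) ltac:(lra).
have hN : (m <= 2 ^ m)%N by apply: ltnW; apply: ltn_expl.
have hNr : INR m <= INR (2 ^ m)%N by apply: le_INR; apply/leP.
have := bernoulli (2 ^ m)%N (Rlt_le _ _ hy).
have := hb m.
nra.
Qed.

Lemma doubling_rayleigh (a : nat -> R) rho E d :
  0 < rho -> 0 <= a O -> 0 <= E ->
  (forall j, (a j) ^ 2 <= a O * a (2 * j)%N) ->
  (forall k, Rabs (a k) <= E * (INR k + 1) ^ d * rho ^ k) ->
  a 1%N <= rho * a O.
Proof.
move=> hr ha0 hE hdb hg.
case: (Rle_lt_or_eq_dec _ _ ha0) => ha0'; last first.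
  have := hdb 1%N; rewrite -ha0' Rmult_0_l => h.
  have : a 1%N = 0 by nra.
  lra.
apply: Rnot_lt_le => hlt.
set b := a 1%N / a O.
have hb : rho < b.
  rewrite /b; apply: (Rmult_lt_reg_r (a O)) => //.
  rewrite /Rdiv Rmult_assoc Rinv_l; lra.
have hab : a 1%N = a O * b by rewrite /b; field; lra.
have key : forall m : nat, a O * b ^ (2 ^ m)%N <= a (2 ^ m)%N.
  elim=> [|m IH]; first by rewrite expn0 /= Rmult_1_r hab; lra.
  rewrite expnS.
  have h1 := hdb (2 ^ m)%N.
  have hp : 0 <= a O * b ^ (2 ^ m)%N.
    apply: Rmult_le_pos; [lra|]; apply: pow_le; lra.
  have e : b ^ (2 * 2 ^ m)%N = b ^ (2 ^ m)%N * b ^ (2 ^ m)%N.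
    by rewrite -pow_add; congr (_ ^ _); rewrite mul2n -addnn.
  rewrite e.
  have h3 : (a O * b ^ (2 ^ m)%N) ^ 2 <= (a (2 ^ m)%N) ^ 2.
    by apply: pow_incr; split.
  have : a O * (a O * (b ^ (2 ^ m)%N * b ^ (2 ^ m)%N)) <= a O * a (2 * 2 ^ m)%N.
    apply: Rle_trans h1; rewrite /= in h3 *; nra.
  move=> h4; apply: (Rmult_le_reg_l (a O)) => //; lra.
apply: (exp_beats (x := b / rho) (K := E / a O) (d := d)).
- apply: (Rmult_lt_reg_r rho) => //; rewrite /Rdiv Rmult_assoc Rinv_l; lra.
- apply: Rdiv_le_0_compat; lra.
move=> m; set N := (2 ^ m)%N.
have h1 := key m; have h2 := hg N.
have h3 : a N <= E * (INR N + 1) ^ d * rho ^ N.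
  apply: Rle_trans (Rle_abs _) h2.
have hrN : 0 < rho ^ N by apply: pow_lt.
rewrite /Rdiv Rpow_mult_distr pow_inv.
have h4 : a O * b ^ N <= E * (INR N + 1) ^ d * rho ^ N := Rle_trans _ _ _ h1 h3.
have hi : 0 < / rho ^ N by apply: Rinv_0_lt_compat.
have hia : 0 < / a O by apply: Rinv_0_lt_compat.
have -> : b ^ N * / rho ^ N = (a O * b ^ N) * / a O * / rho ^ N.
  field; split; lra.
have -> : E * / a O * (INR N + 1) ^ d = (E * (INR N + 1) ^ d * rho ^ N) * / a O * / rho ^ N.
  field; split; lra.
apply: Rmult_le_compat_r; first lra.
apply: Rmult_le_compat_r; first lra.
exact: h4.
Qed.

From Stdlib Require Import FunctionalExtensionality.

Section Chain.
Variable n' : nat.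
Local Notation n := n'.+1.
Variable P : 'M[R]_n.
Variable pi : 'I_n -> R.
Hypothesis hT : transition_matrix P.
Hypothesis hI : irreducible P.
Hypothesis hpi : probability pi.
Hypothesis hR : reversible P pi.

Definition Pv (f : 'I_n -> R) (z : 'I_n) : R := rsum (fun w => P z w * f w).
Definition ip (f g : 'I_n -> R) : R := rsum (fun z => pi z * f z * g z).
Definition mean (f : 'I_n -> R) : R := rsum (fun z => pi z * f z).

Lemma P_ge0 z w : 0 <= P z w. Proof. by case: hT. Qed.
Lemma P_row z : rsum (fun w => P z w) = 1. Proof. case: hT => _ h; exact: h z. Qed.
Lemma pi_ge0 z : 0 <= pi z. Proof. by case: hpi. Qed.
Lemma pi_sum : rsum pi = 1. Proof. case: hpi => _ h; exact: h. Qed.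

Lemma Pv_lin f g a : Pv (fun z => f z - a * g z) = fun z => Pv f z - a * Pv g z.
Proof.
apply: functional_extensionality => z; rewrite /Pv -rsum_scal -rsum_sub.
apply: rsum_ext => w; ring.
Qed.

Lemma Pv_const c : Pv (fun _ => c) = fun _ => c.
Proof.
apply: functional_extensionality => z; rewrite /Pv.
rewrite (rsum_ext (G := fun w => c * P z w)); last by move=> w; ring.
rewrite rsum_scal P_row; ring.
Qed.

Lemma Pv0 : Pv (fun _ => 0) = fun _ => 0.
Proof. exact: Pv_const. Qed.

Lemma mean_Pv f : mean (Pv f) = mean f.
Proof.
rewrite /mean /Pv.
rewrite (rsum_ext (G := fun z => rsum (fun w => pi z * P z w * f w))); last first.
  by move=> z; rewrite -rsum_scal; apply: rsum_ext => w; ring.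
rewrite rsum_exch; apply: rsum_ext => w.
rewrite (rsum_ext (G := fun z => (pi w * f w) * P w z)); last first.
  by move=> z; rewrite hR; ring.
rewrite rsum_scal P_row; ring.
Qed.

Lemma ip_Pv f g : ip f (Pv g) = ip (Pv f) g.
Proof.
rewrite /ip /Pv.
rewrite (rsum_ext (G := fun z => rsum (fun w => pi z * P z w * f z * g w))); last first.
  by move=> z; rewrite -rsum_scal; apply: rsum_ext => w; ring.
rewrite rsum_exch; apply: rsum_ext => w.
rewrite (rsum_ext (G := fun z => (pi w * g w) * (P w z * f z))); last first.
  by move=> z; rewrite hR; ring.
rewrite rsum_scal; ring.
Qed.

Lemma ip_lin2 f g h a : ip f (fun z => g z - a * h z) = ip f g - a * ip f h.
Proof.
rewrite /ip -rsum_scal -rsum_sub; apply: rsum_ext => z; ring.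
Qed.

Lemma ip_sym f g : ip f g = ip g f.
Proof. rewrite /ip; apply: rsum_ext => z; ring. Qed.

Lemma ip_ge0 f : 0 <= ip f f.
Proof.
apply: rsum_ge0 => z; have := pi_ge0 z; have := Rle_0_sqr (f z); rewrite /Rsqr; nra.
Qed.

Lemma cauchy_schwarz f g : (ip f g) ^ 2 <= ip f f * ip g g.
Proof.
have quad : forall t, 0 <= ip f f - 2 * t * ip f g + t * t * ip g g.
  move=> t; have h := ip_ge0 (fun z => f z - t * g z).
  suff -> : ip f f - 2 * t * ip f g + t * t * ip g g =
            ip (fun z => f z - t * g z) (fun z => f z - t * g z) by [].
  rewrite /ip.
  transitivity (rsum (fun z => pi z * f z * f z - (2 * t) * (pi z * f z * g z))
               + (t * t) * rsum (fun z => pi z * g z * g z)).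
    by rewrite rsum_sub !rsum_scal.
  rewrite -rsum_scal -rsum_add; apply: rsum_ext => z; ring.
have hff := ip_ge0 f; have hgg := ip_ge0 g.
case: (Rle_lt_or_eq_dec _ _ hgg) => hg.
  have := quad (ip f g / ip g g).
  have e : ip f f - 2 * (ip f g / ip g g) * ip f g + ip f g / ip g g * (ip f g / ip g g) * ip g g
         = (ip f f * ip g g - ip f g ^ 2) / ip g g by field; lra.
  rewrite e => h.
  have : 0 <= (ip f f * ip g g - ip f g ^ 2) / ip g g * ip g g by nra.
  have -> : (ip f f * ip g g - ip f g ^ 2) / ip g g * ip g g = ip f f * ip g g - ip f g ^ 2
    by field; lra.
  lra.
rewrite -hg Rmult_0_r.
case: (Req_dec (ip f g) 0) => hfg; first by rewrite hfg; lra.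
have := quad ((ip f f + 1) / (2 * ip f g)); rewrite -hg Rmult_0_r Rplus_0_r.
have -> : ip f f - 2 * ((ip f f + 1) / (2 * ip f g)) * ip f g = -1 by field.
lra.
Qed.

Lemma closure (S : 'I_n -> Prop) z0 : S z0 ->
  (forall w v, S w -> 0 < P w v -> S v) -> forall v, S v.
Proof.
move=> h0 hcl v; have [t ht] := hI z0 v.
elim: t v ht => [|t IH] v /=.
  rewrite mxE; case: eqP => [<- //|_]; rewrite GRing.mulr0n => h; exfalso; move: h; rn; lra.
rewrite mxE => hpos.
have [u hu] := rsum_pos_ex (F := fun u => mpow P t z0 u * P u v) hpos.
have hPu := P_ge0 u v.
have hP : 0 < P u v.
  case: (Rle_lt_or_eq_dec _ _ hPu) => // e; rewrite -e in hu; lra.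
have hm : 0 < mpow P t z0 u.
  apply: Rnot_le_lt => hle; have : mpow P t z0 u * P u v <= 0 by nra. lra.
exact: hcl _ _ (IH _ hm) hP.
Qed.

Lemma pi_pos z : 0 < pi z.
Proof.
have [z0 hz0] : exists z0, 0 < pi z0.
  apply: rsum_pos_ex; rewrite pi_sum; lra.
apply: (closure (S := fun z => 0 < pi z) hz0) => w v hw hp.
have := hR w v; have := pi_ge0 v => h1 h2.
case: (Rle_lt_or_eq_dec _ _ h1) => // e; rewrite -e in h2; nra.
Qed.

Lemma finite_max (g : 'I_n -> R) : exists zm, forall z, g z <= g zm.
Proof.
suff : forall s : seq 'I_n, exists zm, forall z, z \in s -> g z <= g zm.
  move=> /(_ (enum 'I_n)) [zm hzm]; exists zm => z; apply: hzm; by rewrite mem_enum.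
elim=> [|a s [zm hzm]]; first by exists ord0.
case: (Rle_dec (g a) (g zm)) => h.
  exists zm => z; rewrite inE => /orP [/eqP -> //|]; exact: hzm.
exists a => z; rewrite inE => /orP [/eqP -> |/hzm]; [exact: Rle_refl|lra].
Qed.

Lemma harmonic_const (g : 'I_n -> R) : (forall z, Pv g z = g z) -> forall z w, g z = g w.
Proof.
move=> hg.
have [zm hzm] := finite_max g.
suff hall : forall v, g v = g zm by move=> z w; rewrite !hall.
apply: (closure (S := fun v => g v = g zm) (z0 := zm) erefl) => w v hw hp.
have hs : rsum (fun u => P w u * (g zm - g u)) <= 0.
  rewrite (rsum_ext (G := fun u => g zm * P w u - P w u * g u)); last by move=> u; ring.
  rewrite rsum_sub rsum_scal P_row; have := hg w; rewrite /Pv => ->; rewrite hw; lra.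
have := rsum_eq0_each (F := fun u => P w u * (g zm - g u)) ltac:(move=> u; have := P_ge0 w u; have := hzm u; nra) hs v.
move=> e; have : g zm - g v = 0.
  apply: (Rmult_eq_reg_l (P w v)); [rewrite e; ring | lra].
lra.
Qed.

Definition Mv (M : 'M[R]_n) (f : 'I_n -> R) (z : 'I_n) : R := rsum (fun w => M z w * f w).

Lemma Mv_mul (A B : 'M[R]_n) f : Mv (A * B)%R f = Mv A (Mv B f).
Proof.
apply: functional_extensionality => z; rewrite /Mv.
rewrite (rsum_ext (F := fun w => (A * B)%R z w * f w)
                  (G := fun w => rsum (fun u => A z u * B u w * f w))); last first.
  move=> w; rewrite [(A * B)%R z w]mxE.
  transitivity (rsum (fun u => A z u * B u w) * f w); first by [].
  rewrite Rmult_comm -rsum_scal; apply: rsum_ext => u; ring.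
rewrite rsum_exch; apply: rsum_ext => u.
rewrite -rsum_scal; apply: rsum_ext => w; ring.
Qed.

Lemma Mv_PB a f : Mv (P - a%:M)%R f = fun z => Pv f z - a * f z.
Proof.
apply: functional_extensionality => z; rewrite /Mv /Pv.
rewrite (rsum_D1 _ z) (rsum_D1 (fun w => P z w * f w) z).
rewrite !mxE eqxx GRing.mulr1n.
rewrite (rsum_ext (F := fun w => if w != z then (P - a%:M)%R z w * f w else 0)
                  (G := fun w => if w != z then P z w * f w else 0)); last first.
  move=> w; case: eqP => //= hw; rewrite !mxE.
  have -> : (z == w) = false by apply/eqP => e; apply: hw; rewrite e.
  by rewrite GRing.mulr0n; fixR; ring.
fixR; ring.
Qed.

Definition Vop (r : seq R) (f : 'I_n -> R) : 'I_n -> R :=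
  foldr (fun a g => fun z => Pv g z - a * g z) f r.

Lemma Mv_prod (r : seq R) f : Mv (\prod_(a <- r) (P - a%:M))%R f = Vop r f.
Proof.
elim: r => [|a r IH] /=.
  rewrite big_nil; apply: functional_extensionality => z; rewrite /Mv.
  rewrite (rsum_D1 _ z) !mxE eqxx GRing.mulr1n.
  rewrite (rsum_ext (G := fun _ => 0)); last first.
    move=> w; case: eqP => //= hw; rewrite !mxE.
    have -> : (z == w) = false by apply/eqP => e; apply: hw; rewrite e.
    by rewrite GRing.mulr0n; fixR; ring.
  rewrite rsum0; fixR; ring.
by rewrite big_cons Mv_mul IH Mv_PB.
Qed.

Lemma Vop_char (s : seq R) : char_poly P = (\prod_(a <- s) ('X - a%:P))%R ->
  forall f, Vop s f = fun _ => 0.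
Proof.
move=> hc f.
have h0 : (\prod_(a <- s) (P - a%:M))%R = 0%R.
  have := Cayley_Hamilton P; rewrite hc GRing.rmorph_prod => <-.
  apply: eq_bigr => a _; by rewrite GRing.rmorphB /= horner_mx_X horner_mx_C.
rewrite -Mv_prod h0; apply: functional_extensionality => z; rewrite /Mv.
rewrite (rsum_ext (G := fun _ => 0)) ?rsum0 // => w; rewrite mxE; rn; ring.
Qed.

Lemma Vop_ones (r : seq R) : Vop r (fun _ => 1) = fun _ => \big[Rmult/1]_(a <- r) (1 - a).
Proof.
elim: r => [|a r IH] /=; first by rewrite big_nil.
rewrite IH Pv_const big_cons; apply: functional_extensionality => z; ring.
Qed.

Lemma one_in_s (s : seq R) : char_poly P = (\prod_(a <- s) ('X - a%:P))%R -> List.In 1 s.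
Proof.
move=> hc; have := Vop_char hc (fun _ => 1); rewrite Vop_ones => /(congr1 (fun F => F ord0)) /=.
elim: s {hc} => [|a s IH] /=; first by rewrite big_nil; lra.
rewrite big_cons => h; case: (Rmult_integral _ _ h) => h'.
  by left; lra.
by right; apply: IH.
Qed.

Definition pw (k : nat) (f : 'I_n -> R) : 'I_n -> R := iter k Pv f.

Lemma pw_lin k f g a : pw k (fun z => f z - a * g z) = fun z => pw k f z - a * pw k g z.
Proof.
elim: k => [|k IH] //=; rewrite /pw /= -/(pw k f) -/(pw k g) -/(pw k _) IH; exact: Pv_lin.
Qed.

Lemma pw_S k f : pw k (Pv f) = pw k.+1 f.
Proof. by rewrite /pw iterSr. Qed.

Lemma pw0 k : pw k (fun _ => 0) = fun _ => 0.
Proof. elim: k => [|k IH] //=; rewrite /pw /= -/(pw k _) IH; exact: Pv0. Qed.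

Lemma pw_add j k f : pw j (pw k f) = pw (j + k) f.
Proof. by rewrite /pw iterD. Qed.

Lemma ip_pw_adj k g h : ip (pw k g) h = ip g (pw k h).
Proof.
elim: k h => [|k IH] h //=.
rewrite /pw /= -/(pw k g) -ip_Pv IH pw_S; by [].
Qed.

Lemma mean_lin F G a : mean (fun z => F z - a * G z) = mean F - a * mean G.
Proof. rewrite /mean -rsum_scal -rsum_sub; apply: rsum_ext => z; ring. Qed.

Lemma mean_Vop r g : mean g = 0 -> mean (Vop r g) = 0.
Proof.
move=> hg; elim: r => [|a r IH] //=.
rewrite mean_lin mean_Pv IH; ring.
Qed.

Lemma ip_zero f : ip f (fun _ => 0) = 0.
Proof. rewrite /ip (rsum_ext (G := fun _ => 0)) ?rsum0 // => z; ring. Qed.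

Lemma app_rel r f g k : app_ops r (fun k => ip f (pw k g)) k = ip f (pw k (Vop r g)).
Proof.
elim: r k => [|a r IH] k //=.
rewrite /Dop !IH pw_lin ip_lin2 pw_S; by [].
Qed.

Lemma Vop_rest_zero rest g :
  char_poly P = (\prod_(a <- 1 :: rest) ('X - a%:P))%R -> mean g = 0 ->
  Vop rest g = fun _ => 0.
Proof.
move=> hc hg.
have hV := Vop_char hc g; rewrite /= in hV.
set h := Vop rest g in hV *.
have hh : forall z, Pv h z = h z.
  move=> z; have := congr1 (fun F => F z) hV; rewrite /=; rn => e; lra.
have hcst := harmonic_const hh.
have hm := mean_Vop rest hg; rewrite -/h in hm.
have : mean h = h ord0.
  rewrite /mean (rsum_ext (G := fun z => h ord0 * pi z)); last by move=> z; rewrite (hcst z ord0); ring.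
  rewrite rsum_scal pi_sum; ring.
move=> e; apply: functional_extensionality => z; rewrite (hcst z ord0); lra.
Qed.

Lemma rayleigh rest rho f :
  char_poly P = (\prod_(a <- 1 :: rest) ('X - a%:P))%R ->
  0 < rho -> (forall a, List.In a rest -> Rabs a <= rho) -> mean f = 0 ->
  ip f (Pv f) <= rho * ip f f.
Proof.
move=> hc hr hin hf.
set a := fun k => ip f (pw k f).
have happ : forall k, app_ops rest a k = 0.
  move=> k; rewrite /a app_rel (Vop_rest_zero hc hf) pw0 ip_zero; by [].
have [E [hE hg]] := growth hr hin (m := 0) (D := 0) (u := a) (Rle_refl 0)
  (fun k => ltac:(rewrite happ Rabs_R0; have := pos_pow_INR k 0; have := pow_le rho k (Rlt_le _ _ hr); nra)).
have := doubling_rayleigh (a := a) hr (ip_ge0 f) hE _ hg.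
apply.
move=> j; rewrite /a.
have := cauchy_schwarz f (pw j f).
rewrite ip_pw_adj pw_add addnn -mul2n; by [].
Qed.

Definition Lap (f : 'I_n -> R) (z : 'I_n) : R := f z - Pv f z.

Lemma key_ineq rest rho psi :
  char_poly P = (\prod_(a <- 1 :: rest) ('X - a%:P))%R ->
  0 < rho -> rho < 1 -> (forall a, List.In a rest -> Rabs a <= rho) ->
  (1 - rho) * ip psi (Lap psi) <= ip (Lap psi) (Lap psi).
Proof.
move=> hc hr hr1 hin.
set al := mean psi.
set v := fun z => psi z - al * 1.
have hv : mean v = 0.
  rewrite /v mean_lin; have -> : mean (fun _ => 1) = 1.
    rewrite /mean (rsum_ext (G := pi)) ?pi_sum // => z; ring.
  rewrite /al; ring.
have hLv : Lap v = Lap psi.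
  apply: functional_extensionality => z; rewrite /Lap /v Pv_lin Pv_const; ring.
have hmL : mean (Lap psi) = 0.
  rewrite /Lap (_ : (fun z => psi z - Pv psi z) = fun z => psi z - 1 * Pv psi z); last first.
    by apply: functional_extensionality => z; ring.
  rewrite mean_lin mean_Pv; ring.
have e1 : ip v (Lap v) = ip psi (Lap psi).
  rewrite hLv ip_sym /v ip_lin2.
  have -> : ip (Lap psi) (fun _ => 1) = mean (Lap psi).
    rewrite /ip /mean; apply: rsum_ext => z; ring.
  rewrite hmL ip_sym; ring.
have hray := rayleigh hc hr hin hv.
have e2 : ip v (Lap v) = ip v v - ip v (Pv v).
  rewrite /Lap (_ : (fun z => v z - Pv v z) = fun z => v z - 1 * Pv v z); last first.
    by apply: functional_extensionality => z; ring.
  rewrite ip_lin2; ring.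
have hcs := cauchy_schwarz v (Lap v).
have hvv := ip_ge0 v.
have hLL := ip_ge0 (Lap v).
rewrite -e1 -hLv.
have hX : (1 - rho) * ip v v <= ip v (Lap v) by lra.
case: (Rle_lt_or_eq_dec _ _ hvv) => hv0.
  have hX0 : 0 <= ip v (Lap v) by nra.
  apply: (Rmult_le_reg_l (ip v v)) => //.
  have : (1 - rho) * ip v (Lap v) * ip v v <= ip v (Lap v) ^ 2 by nra.
  nra.
have : ip v (Lap v) ^ 2 <= 0 by rewrite -hv0 in hcs; lra.
move=> h; have : ip v (Lap v) = 0 by nra.
move=> ->; lra.
Qed.

Variables x y : 'I_n.
Hypothesis hxy : x != y.

Definition live (k : nat) (z : 'I_n) : R :=
  if (k == 0)%N || ((z != x) && (z != y)) then fp P x y k z else 0.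

Lemma fp_S k z : fp P x y k.+1 z = rsum (fun w => live k w * P w z).
Proof.
rewrite /= /rsum big_mkcond /=; apply: eq_bigr => w _; rewrite /live.
case: ifP => _; last by fixR; ring.
by [].
Qed.

Lemma fp_ge0 k z : 0 <= fp P x y k z.
Proof.
elim: k z => [|k IH] z.
  rewrite /=; case: eqP => _; rn; lra.
rewrite fp_S; apply: rsum_ge0 => w; apply: Rmult_le_pos; last exact: P_ge0.
rewrite /live; case: ifP => _; [exact: IH | exact: Rle_refl].
Qed.

Lemma live_ge0 k z : 0 <= live k z.
Proof. rewrite /live; case: ifP => _; [exact: fp_ge0 | exact: Rle_refl]. Qed.

Lemma live0x : live 0 x = 1.
Proof. by rewrite /live /= eqxx. Qed.

Lemma live0 z : z != x -> live 0 z = 0.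
Proof. move=> hz; rewrite /live /=; by rewrite (negbTE hz). Qed.

Lemma liveSx k : live k.+1 x = 0.
Proof. by rewrite /live /= eqxx. Qed.

Lemma live_y k : live k y = 0.
Proof.
case: k => [|k]; first by apply: live0; rewrite eq_sym.
by rewrite /live /= eqxx andbF.
Qed.

Lemma liveS_int k z : z != x -> z != y -> live k.+1 z = fp P x y k.+1 z.
Proof. by move=> h1 h2; rewrite /live /= h1 h2. Qed.

Fixpoint Hs (K : nat) (z : 'I_n) : R :=
  match K with O => live 0 z | S K' => Hs K' z + live K z end.

Fixpoint Fs (K : nat) (z : 'I_n) : R :=
  match K with O => fp P x y 1 z | S K' => Fs K' z + fp P x y K.+1 z end.

Definition ps (K : nat) : R := sum_f_R0 (escape_term P x y) K.

Lemma Hs_ge0 K z : 0 <= Hs K z.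
Proof. elim: K => [|K IH] /=; first exact: live_ge0. have := live_ge0 K.+1 z; lra. Qed.

Lemma Hs_x K : Hs K x = 1.
Proof. elim: K => [|K IH] /=; first exact: live0x. by rewrite IH liveSx Rplus_0_r. Qed.

Lemma Hs_y K : Hs K y = 0.
Proof. elim: K => [|K IH] /=; first exact: live_y. by rewrite IH live_y Rplus_0_r. Qed.

Lemma HsP K z : rsum (fun w => Hs K w * P w z) = Fs K z.
Proof.
elim: K => [|K IH]; first by change (Fs 0 z) with (fp P x y 1 z); rewrite fp_S.
change (Fs K.+1 z) with (Fs K z + fp P x y K.+2 z).
change (Hs K.+1) with (fun w => Hs K w + live K.+1 w).
rewrite (rsum_ext (G := fun w => Hs K w * P w z + live K.+1 w * P w z)); last by move=> w; ring.
by rewrite rsum_add IH fp_S.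
Qed.

Lemma Fs_y K : Fs K y = ps K.
Proof. elim: K => [|K IH] //=; by rewrite IH. Qed.

Lemma Fs_int K z : z != x -> z != y -> Fs K z = Hs K z + live K.+1 z.
Proof.
move=> h1 h2; elim: K => [|K IH].
  change (fp P x y 1 z = live 0 z + live 1 z).
  by rewrite live0 // Rplus_0_l liveS_int.
change (Fs K z + fp P x y K.+2 z = (Hs K z + live K.+1 z) + live K.+2 z).
rewrite IH (liveS_int K.+1 h1 h2); ring.
Qed.

Lemma ps_ge0 K : 0 <= ps K.
Proof.
rewrite -Fs_y; elim: K => [|K IH]; first exact: fp_ge0.
change (0 <= Fs K y + fp P x y K.+2 y).
have := fp_ge0 K.+2 y; lra.
Qed.

Definition psi K (z : 'I_n) : R := Hs K z / pi z.

Lemma Pv_psi K z : Pv (psi K) z = Fs K z / pi z.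
Proof.
have hz := pi_pos z.
rewrite /Pv -HsP /Rdiv Rmult_comm -rsum_scal; apply: rsum_ext => w.
have hw := pi_pos w.
have e := hR z w.
have e' : @eq R (P w z) (pi z * P z w / pi w).
  apply: (Rmult_eq_reg_l (pi w)); last lra.
  rewrite -e; field; lra.
rewrite /psi e'; fixR; field; lra.
Qed.

Definition rr K z := Hs K z - Fs K z.

Lemma Lap_psi K z : Lap (psi K) z = rr K z / pi z.
Proof. rewrite /Lap Pv_psi /psi /rr; field; have := pi_pos z; lra. Qed.

Lemma rr_sum K : rsum (rr K) = 0.
Proof.
rewrite /rr rsum_sub (rsum_ext (F := Fs K) (G := fun z => rsum (fun w => Hs K w * P w z))); last first.
  by move=> z; rewrite HsP.
rewrite rsum_exch.
rewrite (rsum_ext (F := fun w => rsum (fun z => Hs K w * P w z)) (G := Hs K)); first lra.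
by move=> w; rewrite rsum_scal P_row; ring.
Qed.

Definition mK K := rsum (live K.+1).

Lemma mK_ge0 K : 0 <= mK K.
Proof. apply: rsum_ge0 => z; exact: live_ge0. Qed.

Lemma mK_split K : mK K = rsum (fun z => if (z != x) && (z != y) then live K.+1 z else 0).
Proof. by rewrite /mK (rsum_D2 _ hxy) liveSx live_y !Rplus_0_l. Qed.

Lemma rr_x K : rr K x = ps K + mK K.
Proof.
have h := rr_sum K; rewrite (rsum_D2 _ hxy) in h.
have hy : rr K y = - ps K by rewrite /rr Hs_y Fs_y; ring.
have hint : rsum (fun z => if (z != x) && (z != y) then rr K z else 0) = - mK K.
  rewrite mK_split -rsum_opp; apply: rsum_ext => z.
  case: ifP => [/andP [h1 h2]|_]; last ring.
  rewrite /rr (Fs_int K h1 h2); ring.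
lra.
Qed.

Lemma psi_le K z : psi K z <= / pi x.
Proof.
have [zm hzm] := finite_max (psi K).
have hx : psi K x = / pi x by rewrite /psi Hs_x /Rdiv Rmult_1_l.
have hpx := pi_pos x.
suff : psi K zm <= / pi x by have := hzm z; lra.
apply: Rnot_lt_le => hlt.
have hxS : psi K x <> psi K zm by lra.
have hy : psi K y = 0 by rewrite /psi Hs_y /Rdiv Rmult_0_l.
have hinvx : 0 < / pi x by apply: Rinv_0_lt_compat.
have hyS : psi K y <> psi K zm by lra.
suff hall : forall v, psi K v = psi K zm by exact: hxS (hall x).
apply: (closure (S := fun v => psi K v = psi K zm) (z0 := zm) erefl) => w v hw hp.
have hwx : w != x by apply/eqP => e; apply: hxS; rewrite -e.
have hwy : w != y by apply/eqP => e; apply: hyS; rewrite -e.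
have hL : Lap (psi K) w <= 0.
  rewrite Lap_psi /rr (Fs_int K hwx hwy).
  have := live_ge0 K.+1 w; have := pi_pos w => h1 h2.
  have -> : (Hs K w - (Hs K w + live K.+1 w)) / pi w = - (live K.+1 w / pi w) by field; lra.
  have : 0 <= live K.+1 w / pi w by apply: Rdiv_le_0_compat.
  lra.
have hs : rsum (fun u => P w u * (psi K zm - psi K u)) <= 0.
  rewrite (rsum_ext (G := fun u => psi K zm * P w u - P w u * psi K u)); last by move=> u; ring.
  rewrite rsum_sub rsum_scal P_row.
  move: hL; rewrite /Lap /Pv hw; lra.
have := rsum_eq0_each (F := fun u => P w u * (psi K zm - psi K u))
   ltac:(move=> u; have := P_ge0 w u; have := hzm u; nra) hs v.
move=> e; have : psi K zm - psi K v = 0.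
  apply: (Rmult_eq_reg_l (P w v)); [rewrite e; ring | lra].
lra.
Qed.

Definition Binv := rsum (fun z => / pi z).

Lemma main_K K rho rest :
  char_poly P = (\prod_(a <- 1 :: rest) ('X - a%:P))%R ->
  0 < rho -> rho < 1 -> (forall a, List.In a rest -> Rabs a <= rho) ->
  (1 - rho) * (ps K / pi x) <=
  (ps K + mK K) ^ 2 / pi x + (ps K) ^ 2 / pi y + (mK K) ^ 2 * Binv.
Proof.
move=> hc hr hr1 hin.
have hk := key_ineq (psi K) hc hr hr1 hin.
have hpx := pi_pos x; have hpy := pi_pos y.
have e1 : ip (psi K) (Lap (psi K)) = rsum (fun z => psi K z * rr K z).
  rewrite /ip; apply: rsum_ext => z; rewrite Lap_psi; field; have := pi_pos z; lra.
have e2 : ip (Lap (psi K)) (Lap (psi K)) = rsum (fun z => rr K z ^ 2 / pi z).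
  rewrite /ip; apply: rsum_ext => z; rewrite Lap_psi; field; have := pi_pos z; lra.
have hy : rr K y = - ps K by rewrite /rr Hs_y Fs_y; ring.
have hpsx : psi K x = / pi x by rewrite /psi Hs_x /Rdiv Rmult_1_l.
have hpsy : psi K y = 0 by rewrite /psi Hs_y /Rdiv Rmult_0_l.
have hmint := mK_split K.
have low : ps K / pi x <= ip (psi K) (Lap (psi K)).
  rewrite e1 (rsum_D2 _ hxy) hpsx hpsy rr_x.
  have : rsum (fun z => if (z != x) && (z != y) then psi K z * rr K z else 0)
         >= - (mK K / pi x).
    rewrite hmint /Rdiv Rmult_comm -rsum_scal -rsum_opp.
    apply: Rle_ge; apply: rsum_le => z; case: ifP => [/andP [h1 h2]|_]; last lra.
    rewrite /rr (Fs_int K h1 h2).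
    have := psi_le K z; have := live_ge0 K.+1 z.
    have : 0 <= psi K z by apply: Rdiv_le_0_compat; [exact: Hs_ge0|exact: pi_pos].
    nra.
  have e : / pi x * (ps K + mK K) = ps K / pi x + mK K / pi x by field; lra.
  lra.
have up : ip (Lap (psi K)) (Lap (psi K)) <=
          (ps K + mK K) ^ 2 / pi x + (ps K) ^ 2 / pi y + (mK K) ^ 2 * Binv.
  rewrite e2 (rsum_D2 _ hxy) rr_x hy.
  have : rsum (fun z => if (z != x) && (z != y) then rr K z ^ 2 / pi z else 0)
         <= mK K ^ 2 * Binv.
    rewrite /Binv -rsum_scal; apply: rsum_le => z.
    have hz := pi_pos z; have hiz : 0 < / pi z by apply: Rinv_0_lt_compat.
    case: ifP => [/andP [h1 h2]|_]; last by have := pow2_ge_0 (mK K); nra.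
    rewrite /rr (Fs_int K h1 h2).
    have hl := live_ge0 K.+1 z.
    have hlm : live K.+1 z <= mK K by apply: rsum_ge_term => u; exact: live_ge0.
    have -> : (Hs K z - (Hs K z + live K.+1 z)) ^ 2 / pi z = live K.+1 z ^ 2 * / pi z by field; lra.
    apply: Rmult_le_compat_r; first lra.
    apply: pow_incr; lra.
  have -> : (- ps K) ^ 2 = ps K ^ 2 by ring.
  lra.
have hr0 : 0 <= 1 - rho by lra.
have := Rmult_le_compat_l _ _ _ hr0 low.
lra.
Qed.

Lemma mass_bound K : rsum (Hs K) <= / pi x.
Proof.
have hpx := pi_pos x.
apply: Rle_trans (_ : rsum (fun z => / pi x * pi z) <= _).
  apply: rsum_le => z; have := psi_le K z; rewrite /psi => h.
  have hz := pi_pos z.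
  have -> : Hs K z = Hs K z / pi z * pi z by field; lra.
  by apply: Rmult_le_compat_r; [lra|].
by rewrite rsum_scal pi_sum Rmult_1_r; apply: Rle_refl.
Qed.

Lemma mK_small eps k0 : 0 < eps -> exists K, (k0 <= K)%N /\ mK K <= eps.
Proof.
move=> he; apply: NNPP => hn.
have hall : forall K, (k0 <= K)%N -> eps < mK K.
  move=> K hK; apply: Rnot_le_lt => hle; apply: hn; by exists K.
have grow : forall j, INR j * eps <= rsum (Hs (k0 + j)).
  elim=> [|j IH].
    rewrite /= Rmult_0_l; apply: rsum_ge0 => z; exact: Hs_ge0.
  rewrite addnS S_INR.
  change (Hs (k0 + j).+1) with (fun z => Hs (k0 + j) z + live (k0 + j).+1 z).
  rewrite rsum_add.
  have := hall (k0 + j)%N (leq_addr _ _); rewrite /mK; lra.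
have [j hj] := INR_archimed eps (/ pi x) he.
have := grow j; have := mass_bound (k0 + j); lra.
Qed.

Lemma ps_le_p p K : escape_prob P x y p -> ps K <= p.
Proof.
move=> hp; apply: Rnot_lt_le => hlt.
have [N hN] := hp (ps K - p) ltac:(lra).
have mono : forall j, ps K <= ps (K + j).
  elim=> [|j IH]; first by rewrite addn0; apply: Rle_refl.
  rewrite addnS; change (ps K <= ps (K + j) + escape_term P x y (K + j).+1).
  have := fp_ge0 (K + j).+2 y; rewrite /escape_term; lra.
have := hN (K + N)%N ltac:(apply/leP; rewrite leq_addl //).
rewrite /R_dist -/(ps (K + N)).
have := mono N.
move=> h1 h2; have := Rle_abs (ps (K + N) - p); lra.
Qed.

Lemma p_pos p : escape_prob P x y p -> 0 < p.
Proof.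
move=> hp.
have hp0 : 0 <= p by apply: Rle_trans (ps_ge0 0) (ps_le_p 0 hp).
case: (Rle_lt_or_eq_dec _ _ hp0) => // e; exfalso.
have hz : forall k, fp P x y k.+1 y = 0.
  move=> k; have := ps_le_p k hp; rewrite -e -Fs_y.
  have := fp_ge0 k.+1 y.
  case: k => [|k] /=; first lra.
  have := fp_ge0 k.+2 y; have : 0 <= Fs k y by rewrite Fs_y; exact: ps_ge0.
  lra.
have := closure (S := fun z => exists k, 0 < live k z) (z0 := x)
  ltac:(exists 0%N; rewrite live0x; lra).
move=> /(_ _ y) [].
  move=> w v [k hk] hP.
  have hf : 0 < fp P x y k.+1 v.
    rewrite fp_S; apply: Rlt_le_trans (rsum_ge_term (F := fun u => live k u * P u v) w _).
      exact: Rmult_lt_0_compat.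
    move=> u; apply: Rmult_le_pos; [exact: live_ge0| exact: P_ge0].
  case: (eqVneq v x) => [->|hvx]; first by exists 0%N; rewrite live0x; lra.
  case: (eqVneq v y) => [hvy|hvy]; first by rewrite hvy hz in hf; lra.
  by exists k.+1; rewrite liveS_int.
move=> k; rewrite live_y; lra.
Qed.

End Chain.

Lemma bigRmin_le n (F : 'I_n -> R) a z : \big[Rmin/a]_(i < n) F i <= F z.
Proof.
have : z \in index_enum 'I_n by rewrite mem_index_enum.
elim: (index_enum 'I_n) => [|h l IH] //= hz.
rewrite big_cons; case: (eqVneq z h) => [<-|hne]; first exact: Rmin_l.
apply: Rle_trans (Rmin_r _ _) (IH _).
by move: hz; rewrite inE (negbTE hne).
Qed.

Lemma bigRmax_ge n (F : 'I_n -> R) a z : F z <= \big[Rmax/a]_(i < n) F i.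
Proof.
have : z \in index_enum 'I_n by rewrite mem_index_enum.
elim: (index_enum 'I_n) => [|h l IH] //= hz.
rewrite big_cons; case: (eqVneq z h) => [<-|hne]; first exact: Rmax_l.
apply: Rle_trans (IH _) (Rmax_r _ _).
by move: hz; rewrite inE (negbTE hne).
Qed.

Lemma bigRmin_ge0 n (F : 'I_n -> R) a : 0 <= a -> (forall z, 0 <= F z) ->
  0 <= \big[Rmin/a]_(i < n) F i.
Proof.
move=> ha hF; apply: (big_ind (fun v => 0 <= v)) => // u v hu hv.
by apply: Rmin_glb.
Qed.

Lemma slem_ge (rest : seq R) a b : List.In b rest -> Rabs b <= slem (a :: rest).
Proof.
rewrite /slem /=; elim: rest => [|h l IH] //= [->|hb].
  rewrite big_cons; exact: Rmax_l.
rewrite big_cons; apply: Rle_trans (IH hb) (Rmax_r _ _).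
Qed.

Lemma slem_ge0 (s : seq R) : 0 <= slem s.
Proof.
rewrite /slem; apply: (big_ind (fun v => 0 <= v)) => //.
- exact: Rle_refl.
- move=> u v hu hv; apply: Rle_trans hu (Rmax_l _ _).
- move=> i _; exact: Rabs_pos.
Qed.

Lemma lim_aux lam p a b B : 0 <= lam -> lam < 1 -> 0 <= p -> 0 < a -> 0 < b -> 0 <= B ->
  (forall eps, 0 < eps -> eps < 1 - lam -> eps < 1 -> exists q m, 0 <= q /\ Rabs (q - p) < eps /\
     0 <= m /\ m <= eps /\
     (1 - (lam + eps)) * (q * a) <= (q + m) ^ 2 * a + q ^ 2 * b + m ^ 2 * B) ->
  (1 - lam) * (p * a) <= p ^ 2 * a + p ^ 2 * b.
Proof.
move=> hl0 hl1 hp ha hb hB H.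
apply: Rnot_lt_le => hlt.
set d := (1 - lam) * (p * a) - (p ^ 2 * a + p ^ 2 * b).
have hd : 0 < d by rewrite /d; lra.
set C := (1 + p) * a + (4 * p + 4) * a + (2 * p + 1) * b + B + 1.
have hC : 0 < C by rewrite /C; nra.
set e := Rmin (Rmin ((1 - lam) / 2) (1 / 2)) (d / (2 * C)).
have he1 : e <= (1 - lam) / 2 by rewrite /e; apply: Rle_trans (Rmin_l _ _) (Rmin_l _ _).
have he2 : e <= 1 / 2 by rewrite /e; apply: Rle_trans (Rmin_l _ _) (Rmin_r _ _).
have he3 : e <= d / (2 * C) by rewrite /e; apply: Rmin_r.
have he0 : 0 < e.
  rewrite /e; apply: Rmin_glb_lt; [apply: Rmin_glb_lt|]; try lra.
  apply: Rdiv_lt_0_compat; lra.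
have [q [m [hq [hqp [hm0 [hme hineq]]]]]] := H e he0 ltac:(lra) ltac:(lra).
have hq1 : p - e <= q /\ q <= p + e by have := Rabs_def2 _ _ hqp; lra.
case: hq1 => hq1 hq2.
have L1 : ((1 - lam) * p - e * (1 + p)) * a <= (1 - (lam + e)) * (q * a).
  have : (1 - lam) * p - e * (1 + p) <= (1 - (lam + e)) * q.
    have : (1 - (lam + e)) * (p - e) <= (1 - (lam + e)) * q.
      apply: Rmult_le_compat_l; lra.
    nra.
  nra.
have L2 : (q + m) ^ 2 <= p ^ 2 + e * (4 * p + 4).
  have : (q + m) ^ 2 <= (p + 2 * e) ^ 2 by apply: pow_incr; lra.
  nra.
have L3 : q ^ 2 <= p ^ 2 + e * (2 * p + 1).
  have : q ^ 2 <= (p + e) ^ 2 by apply: pow_incr; lra.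
  nra.
have L4 : m ^ 2 * B <= e * B.
  apply: Rmult_le_compat_r => //; nra.
have L2' := Rmult_le_compat_r a _ _ (Rlt_le _ _ ha) L2.
have L3' := Rmult_le_compat_r b _ _ (Rlt_le _ _ hb) L3.
have : d <= e * (C - 1).
  rewrite /d /C; nra.
have : e * (2 * C) <= d.
  have e2C : 0 < 2 * C by lra.
  have := Rmult_le_compat_r (2 * C) _ _ (Rlt_le _ _ e2C) he3.
  rewrite /Rdiv Rmult_assoc Rinv_l; lra.
nra.
Qed.

Lemma final_alg L p px py M mn : 0 < px -> 0 < py -> px <= M -> py <= M -> mn <= py ->
  0 < L -> 0 < p -> L * (p * / px) <= p ^ 2 * / px + p ^ 2 * / py ->
  1 / 2 * L * mn / M <= p.
Proof.
move=> hx hy hxM hyM hmn hL hp h.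
have hM : 0 < M by lra.
have h1 : L * py <= p * (py + px).
  have e1 : L * (p * / px) * (px * py / p) = L * py by field; lra.
  have e2 : (p ^ 2 * / px + p ^ 2 * / py) * (px * py / p) = p * (py + px) by field; lra.
  have hpos : 0 <= px * py / p by apply: Rlt_le; apply: Rdiv_lt_0_compat; nra.
  rewrite -e1 -e2; apply: Rmult_le_compat_r => //.
have h2 : 1 / 2 * L * mn / M <= 1 / 2 * L * py / M.
  rewrite /Rdiv; apply: Rmult_le_compat_r; first by apply: Rlt_le; apply: Rinv_0_lt_compat.
  nra.
apply: Rle_trans h2 _.
have : 1 / 2 * L * py / M * (2 * M) = L * py by field; lra.
have : p * (py + px) <= p * (2 * M) by nra.
move=> h3 h4.
have : 1 / 2 * L * py / M * (2 * M) <= p * (2 * M) by lra.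
move=> h5; apply: (Rmult_le_reg_r (2 * M)); lra.
Qed.

Theorem mainTheorem2 :
  exists c : R, 0 < c /\
  forall (n : nat) (P : 'M[R]_n) (pi : 'I_n -> R),
    transition_matrix P -> irreducible P -> aperiodic P ->
    probability pi -> reversible P pi ->
    forall s : seq R, eigenvalue_list P s ->
    forall x y : 'I_n, x <> y ->
    forall p : R, escape_prob P x y p ->
      c * (1 - slem s) * pi_min pi x / pi_max pi x <= p.
Proof.
exists (1 / 2); split; first lra.
move=> n P pi hT hI _ hpi hR s [hc _] x y hxy p hp.
revert P pi hT hI hpi hR hc x y hxy hp; case: n => [|n'] P pi hT hI hpi hR hc x y hxy hp.
  by case: (x).
have hxy' : x != y by apply/eqP.
have hpp := p_pos hT hI hxy' hp.
have hpx := pi_pos hT hI hpi hR x.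
have hpy := pi_pos hT hI hpi hR y.
have hmax : 0 < pi_max pi x by apply: Rlt_le_trans hpx (bigRmax_ge _ _ x).
have hmin0 : 0 <= pi_min pi x.
  apply: bigRmin_ge0; [lra | move=> z; apply: Rlt_le; exact: (pi_pos hT hI hpi hR)].
have h1 := one_in_s hT hc.
case: s hc h1 => [|a1 rest] hc h1; first by [].
set lam := slem (a1 :: rest).
have hlam0 : 0 <= lam by apply: slem_ge0.
case: (Rle_lt_dec 1 lam) => hlam.
  have : 1 / 2 * (1 - lam) * pi_min pi x / pi_max pi x <= 0.
    have hi : 0 < / pi_max pi x by apply: Rinv_0_lt_compat.
    have : 1 / 2 * (1 - lam) * pi_min pi x <= 0 by nra.
    rewrite /Rdiv; nra.
  lra.
have ha1 : a1 = 1.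
  case: h1 => // hin; have := slem_ge a1 hin; rewrite Rabs_R1 -/lam; lra.
subst a1.
have hrest : forall a, List.In a rest -> Rabs a <= lam by move=> a ha; exact: slem_ge.
have key : (1 - lam) * (p * / pi x) <= p ^ 2 * / pi x + p ^ 2 * / pi y.
  apply: (lim_aux (B := Binv pi)) => //; first lra.
  - apply: Rinv_0_lt_compat; lra.
  - apply: Rinv_0_lt_compat; lra.
  - apply: rsum_ge0 => z; apply: Rlt_le; apply: Rinv_0_lt_compat; exact: (pi_pos hT hI hpi hR).
  move=> eps he he1 he2.
  have [N hN] := hp eps he.
  have [K [hK hmK]] := mK_small hT hI hpi hR hxy' N he.
  exists (ps P x y K), (mK P x y K); split; first exact: ps_ge0.
  split; first by have := hN K (elimT leP hK).
  split; first exact: mK_ge0.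
  split; first exact: hmK.
  have r0 : 0 < lam + eps by lra.
  have r1 : lam + eps < 1 by lra.
  have r2 : forall a, List.In a rest -> Rabs a <= lam + eps.
    move=> a ha; have := hrest a ha; lra.
  have := main_K hT hI hpi hR hxy' K hc r0 r1 r2.
  by rewrite /Rdiv.
apply: (final_alg hpx hpy (bigRmax_ge _ _ x) (bigRmax_ge _ _ y) (bigRmin_le _ _ y)) => //.
lra.
Qed.
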